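(* Let $\Omega$ be a finite search space, let $f$ be an information resource, and let $\mathcal{A}$ be a search algorithm which, run with $f$, produces a random finite sequence $\tilde{P}=(P_1,\dots,P_{|\tilde{P}|})$ of probability distributions on $\Omega$ together with a search history $H$, with joint law $\nu(\cdot\mid f)$. Let $\alpha$ be a rule assigning to each sequence length $n$ a probability distribution $(\alpha_1,\dots,\alpha_n)$ on $\{1,\dots,n\}$. For a target set $t\subseteq\Omega$ define the general probability of success $$q_\alpha(t,f)=\mathbb{E}_{\tilde{P},H}\Big[\sum_{i=1}^{|\tilde{P}|}\alpha_i P_i(w\in t)\,\Big|\, f\Big].$$ Then $q_\alpha$ is decomposable: defining the vector $\mathbf{P}_{\alpha,f}\in\mathbb{R}^{|\Omega|}$ by $\mathbf{P}_{\alpha,f}(x)=\int \sum_{i=1}^{|\tilde{P}|}\alpha_i P_i(x)\,\mathrm{d}\nu(\tilde{P},h\mid f)$ for $x\in\Omega$, $\mathbf{P}_{\alpha,f}$ is a probability distribution on $\Omega$ that does not depend on $t$, and for every $t\subseteq\Omega$, $$q_\alpha(t,f)=\mathbf{t}^\top\mathbf{P}_{\alpha,f},$$ where $\mathbf{t}\in\{0,1\}^{|\Omega|}$ is the indicator vector of $t$.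
   Context: A probability-of-success metric $\phi$ assigns to each target set $t\subseteq\Omega$ and information resource $f$ a success probability. It is called decomposable if for each $f$ there exists a probability vector $\mathbf{P}_{\phi,f}\in\mathbb{R}^{|\Omega|}$ (nonnegative entries summing to $1$), not a function of $t$, such that $\phi(t,f)=\mathbf{t}^\top\mathbf{P}_{\phi,f}$ for all $t$, where $\mathbf{t}$ is the $0/1$ indicator vector of $t$. *)

(* Defs.v *)
From HB Require Import structures.
From mathcomp Require Import all_boot all_order all_algebra.
From mathcomp Require Import all_classical all_reals all_analysis.
Set Implicit Arguments. Unset Strict Implicit. Unset Printing Implicit Defensive.
Import Order.TTheory GRing.Theory Num.Theory.
Local Open Scope ring_scope.

Section Defs.
Context {R : realType} {Omega : finType}.

Definition is_prob_vec (p : Omega -> R) : Prop :=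
  (forall w, 0 <= p w) /\ \sum_(w : Omega) p w = 1.

(* alpha n is a probability distribution on {0,...,n-1} (0-indexed) *)
Definition is_weight_rule (alpha : nat -> nat -> R) : Prop :=
  forall n, (0 < n)%N ->
    (forall i, (i < n)%N -> 0 <= alpha n i) /\ \sum_(i < n) alpha n i = 1.

Definition ind_vec (t : {set Omega}) (w : Omega) : R := if w \in t then 1 else 0.

Definition dotv (u v : Omega -> R) : R := \sum_(w : Omega) u w * v w.

Definition mix (alpha : nat -> nat -> R) (s : seq (Omega -> R)) (w : Omega) : R :=
  \sum_(i < size s) alpha (size s) i * nth (fun _ => 0) s i w.

Definition mix_succ (alpha : nat -> nat -> R) (s : seq (Omega -> R))
  (t : {set Omega}) : R :=
  \sum_(i < size s) alpha (size s) i * (\sum_(w in t) nth (fun _ => 0) s i w).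

Definition decomposable (phi : {set Omega} -> R) : Prop :=
  exists P : Omega -> R, is_prob_vec P /\ forall t, phi t = dotv (ind_vec t) P.

End Defs.

(* General probability of success q_alpha(t,f): the outcome (P~, H) of running
   the algorithm with f is modelled as a point x of a measurable space X with law
   nu (= nu(.|f)); Ptil x is the sequence of distributions P~. *)
Definition q_alpha {d} {X : measurableType d} {R : realType} {Omega : finType}
  (nu : probability X R) (Ptil : X -> seq (Omega -> R)) (alpha : nat -> nat -> R)
  (t : {set Omega}) : R :=
  Rintegral nu setT (fun x => mix_succ alpha (Ptil x) t).

Definition P_alpha {d} {X : measurableType d} {R : realType} {Omega : finType}
  (nu : probability X R) (Ptil : X -> seq (Omega -> R)) (alpha : nat -> nat -> R)
  (w : Omega) : R :=
  Rintegral nu setT (fun x => mix alpha (Ptil x) w).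

(* Main.v *)
Require Import Defs.
From HB Require Import structures.
From mathcomp Require Import all_boot all_order all_algebra.
From mathcomp Require Import all_classical all_reals all_analysis.
From mathcomp Require Import measurable_realfun.
Import Order.TTheory GRing.Theory Num.Theory.
Local Open Scope ring_scope.

Section Helpers.
Context {R : realType} {Omega : finType} {d : measure_display} {X : measurableType d}.

Lemma Rint_sum (mu : probability X R) (g : Omega -> X -> R) (P : pred Omega)
  (s : seq Omega) :
  (forall w, mu.-integrable setT (EFin \o g w)) ->
  Rintegral mu setT (fun x => \sum_(w <- s | P w) g w x) =
  \sum_(w <- s | P w) Rintegral mu setT (g w).
Proof.
move=> ig.
elim: s => [|i s IH].
  under eq_fun do rewrite big_nil.
  by rewrite big_nil Rintegral_cst // mul0r.
under eq_fun do rewrite big_cons.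
rewrite big_cons.
case: (P i) => //.
rewrite RintegralD //; first by rewrite IH.
have -> : (EFin \o (fun x => \sum_(w <- s | P w) g w x))
  = (fun x => \sum_(w <- s | P w) (EFin \o g w) x)%E.
  by apply: funext => x /=; rewrite -sumEFin.
by apply: integrable_sum.
Qed.

End Helpers.

Theorem lemma2 (R : realType) (Omega : finType) (d : measure_display)
  (X : measurableType d) (F : Type) (nu : F -> probability X R)
  (Ptil : F -> X -> seq (Omega -> R)) (alpha : nat -> nat -> R)
  (Halpha : is_weight_rule alpha)
  (Hnonempty : forall f x, (0 < size (Ptil f x))%N)
  (Hdist : forall f x P, P \in Ptil f x -> is_prob_vec P)
  (Hmeas : forall f w, measurable_fun setT (fun x => mix alpha (Ptil f x) w))
  (f : F) :
  is_prob_vec (P_alpha (nu f) (Ptil f) alpha) /\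
  (forall t : {set Omega},
     q_alpha (nu f) (Ptil f) alpha t = dotv (ind_vec t) (P_alpha (nu f) (Ptil f) alpha)) /\
  decomposable (q_alpha (nu f) (Ptil f) alpha).
Proof.
set mu := nu f.
have Hs : forall x, \sum_(w : Omega) mix alpha (Ptil f x) w = 1.
  move=> x; rewrite /mix exchange_big /=.
  have [Ha1 Ha2] := Halpha _ (Hnonempty f x).
  rewrite -[RHS]Ha2; apply: eq_bigr => i _.
  rewrite -mulr_sumr; have [_ ->] := Hdist f x _ (mem_nth (fun _ => 0) (ltn_ord i)).
  by rewrite mulr1.
have Hsucc : forall x t, mix_succ alpha (Ptil f x) t = \sum_(w in t) mix alpha (Ptil f x) w.
  move=> x t; rewrite /mix_succ /mix exchange_big /=.
  by apply: eq_bigr => i _; rewrite mulr_sumr.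
have Hpos : forall x w, 0 <= mix alpha (Ptil f x) w.
  move=> x w; rewrite /mix; apply: sumr_ge0 => i _.
  have [Ha1 Ha2] := Halpha _ (Hnonempty f x).
  apply: mulr_ge0; first exact: Ha1.
  by have [-> _] := Hdist f x _ (mem_nth (fun _ => 0) (ltn_ord i)).
have Hle1 : forall x w, mix alpha (Ptil f x) w <= 1.
  move=> x w; rewrite -(Hs x) (bigD1 w) //= lerDl.
  by apply: sumr_ge0 => ? _.
have Hint : forall w, mu.-integrable setT (EFin \o (fun x => mix alpha (Ptil f x) w)).
  move=> w; apply/integrableP; split; first exact/measurable_EFinP.
  apply: (le_lt_trans (@integral_le_bound _ _ _ mu setT _ 1%E _ _ _ _)) => //.
  - exact/measurable_EFinP.
  - by apply: aeW => x _ /=; rewrite lee_fin ger0_norm.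
  - by rewrite mul1e -ge0_fin_numE ?measure_ge0 // fin_num_measure.
have HP : is_prob_vec (P_alpha mu (Ptil f) alpha).
  split.
    by move=> w; apply: Rintegral_ge0 => x _; exact: Hpos.
  rewrite /P_alpha -Rint_sum //.
  under eq_fun do rewrite Hs.
  rewrite Rintegral_cst // mul1r.
  have h1 : (mu setT = 1)%E by exact: probability_setT.
  exact: (congr1 fine h1).
have Hq : forall t : {set Omega},
     q_alpha mu (Ptil f) alpha t = dotv (ind_vec t) (P_alpha mu (Ptil f) alpha).
  move=> t; rewrite /q_alpha /dotv.
  under eq_fun do rewrite Hsucc.
  rewrite Rint_sum // big_mkcond /=; apply: eq_bigr => w _.
  by rewrite /ind_vec; case: (w \in t); rewrite ?mul1r ?mul0r.
split => //; split => //.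
by exists (P_alpha mu (Ptil f) alpha).
Qed.
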